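(* Let $M=[a_{pq},b_{pq}]_{p=1,\dots,n;\,q=1,\dots,m}$ be a 2-person normal form game matrix, and fix $i\in\{1,\dots,n\}$ and $j\in\{1,\dots,m\}$. Let $x_1,\dots,x_m$ and $y_1,\dots,y_n$ be real numbers with $x_j=y_i$. Then there exists a unique 2-person normal form game matrix $\widehat M=[\hat a_{pq},\hat b_{pq}]$ of dimensions $n\times m$ such that $\widehat M$ can be obtained from $M$ by an OI-transformation, $\hat a_{iq}=x_q$ for all $q\le m$, and $\hat a_{pj}=y_p$ for all $p\le n$.
   Context: A 2-person normal form game matrix of dimensions $n\times m$ is $M=[a_{ij},b_{ij}]_{i\le n,\,j\le m}$, where $(a_{ij},b_{ij})\in\mathbb{R}^2$ are the payoffs of the row player $A$ and column player $B$ when $A$ plays strategy $A_i$ and $B$ plays $B_j$. A preplay offer by $A$ to $B$ of amount $\delta\ge 0$ contingent on $B_j$ replaces $(a_{ij},b_{ij})$ by $(a_{ij}-\delta,b_{ij}+\delta)$ for every $i$ (other entries unchanged); a preplay offer by $B$ to $A$ of amount $\delta\ge0$ contingent on $A_i$ replaces $(a_{ij},b_{ij})$ by $(a_{ij}+\delta,b_{ij}-\delta)$ for every $j$. Each such map is a POI-transformation; an OI-transformation is a composition of finitely many POI-transformations (all amounts non-negative). *)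

(* Defs.v *)
(* Payoffs live in an arbitrary real field R
   (the paper's case is the real numbers). *)
From HB Require Import structures.
From mathcomp Require Import all_boot all_order all_algebra.
Set Implicit Arguments. Unset Strict Implicit. Unset Printing Implicit Defensive.
Import Order.TTheory GRing.Theory Num.Theory.
Local Open Scope ring_scope.

(* A 2-person n x m game matrix: (payoff matrix of A, payoff matrix of B);
   row p <-> strategy A_p, column q <-> strategy B_q. *)
Definition game (R : realFieldType) (n m : nat) : Type :=
  ('M[R]_(n, m) * 'M[R]_(n, m))%type.

(* Preplay offer by A to B of amount d contingent on B_j. *)
Definition offerA (R : realFieldType) (n m : nat) (j : 'I_m) (d : R)
  (G : game R n m) : game R n m :=
  (\matrix_(p < n, q < m) (G.1 p q - (if q == j then d else 0)),
   \matrix_(p < n, q < m) (G.2 p q + (if q == j then d else 0))).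

(* Preplay offer by B to A of amount d contingent on A_i. *)
Definition offerB (R : realFieldType) (n m : nat) (i : 'I_n) (d : R)
  (G : game R n m) : game R n m :=
  (\matrix_(p < n, q < m) (G.1 p q + (if p == i then d else 0)),
   \matrix_(p < n, q < m) (G.2 p q - (if p == i then d else 0))).

Inductive POI (R : realFieldType) (n m : nat) (G : game R n m) : game R n m -> Prop :=
  | POI_A (j : 'I_m) (d : R) : 0 <= d -> POI G (offerA j d G)
  | POI_B (i : 'I_n) (d : R) : 0 <= d -> POI G (offerB i d G).

Inductive OI (R : realFieldType) (n m : nat) (G : game R n m) : game R n m -> Prop :=
  | OI_refl : OI G G
  | OI_step (G1 G2 : game R n m) : OI G G1 -> POI G1 G2 -> OI G G2.

(* Main.v *)
Require Import Defs.
From HB Require Import structures.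
From mathcomp Require Import all_boot all_order all_algebra.
From mathcomp Require Import ring lra.
Import Order.TTheory GRing.Theory Num.Theory.
Set Implicit Arguments. Unset Strict Implicit.
Local Open Scope ring_scope.

Definition Gm (R : realFieldType) (n m : nat) (M : game R n m)
  (a : 'I_m -> R) (b : 'I_n -> R) : game R n m :=
  (\matrix_(p < n, q < m) (M.1 p q - a q + b p),
   \matrix_(p < n, q < m) (M.2 p q + a q - b p)).

Lemma Gm_ext (R : realFieldType) (n m : nat) (M : game R n m) a b a' b' :
  (forall q, a q = a' q) -> (forall p, b p = b' p) -> Gm M a b = Gm M a' b'.
Proof.
move=> Ha Hb; rewrite /Gm; congr (_, _); apply/matrixP => p q; rewrite !mxE Ha Hb //.
Qed.

Lemma Gm0 (R : realFieldType) (n m : nat) (M : game R n m) :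
  M = Gm M (fun _ => 0) (fun _ => 0).
Proof.
case: M => A B; rewrite /Gm; congr (_, _); apply/matrixP => p q; rewrite !mxE /=; ring.
Qed.

Lemma offerA_Gm (R : realFieldType) (n m : nat) (M : game R n m) a b j d :
  offerA j d (Gm M a b) = Gm M (fun q => a q + (if q == j then d else 0)) b.
Proof.
rewrite /offerA /Gm; congr (_, _); apply/matrixP => p q; rewrite !mxE /=; ring.
Qed.

Lemma offerB_Gm (R : realFieldType) (n m : nat) (M : game R n m) a b i d :
  offerB i d (Gm M a b) = Gm M a (fun p => b p + (if p == i then d else 0)).
Proof.
rewrite /offerB /Gm; congr (_, _); apply/matrixP => p q; rewrite !mxE /=; ring.
Qed.

Lemma OI_trans (R : realFieldType) (n m : nat) (G1 G2 G3 : game R n m) :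
  OI G1 G2 -> OI G2 G3 -> OI G1 G3.
Proof.
move=> H12 H23; elim: H23 => [|Ga Gb _ IH P]; first exact: H12.
exact: OI_step IH P.
Qed.

Lemma reachA (R : realFieldType) (n m : nat) (M : game R n m) a b (c : 'I_m -> R) :
  (forall q, 0 <= c q) -> OI (Gm M a b) (Gm M (fun q => a q + c q) b).
Proof.
move=> Hc.
suff H : forall k, OI (Gm M a b)
   (Gm M (fun q : 'I_m => a q + (if (q < k)%N then c q else 0)) b).
  rewrite (@Gm_ext _ _ _ M (fun q => a q + c q) b
     (fun q : 'I_m => a q + (if (q < m)%N then c q else 0)) b) //.
  by move=> q; rewrite ltn_ord.
elim=> [|k IH].
  rewrite -(@Gm_ext _ _ _ M a b) //; first exact: OI_refl.
  by move=> q; rewrite ltn0 addr0.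
case: (ltnP k m) => Hk.
  have E : Gm M (fun q : 'I_m => a q + (if (q < k.+1)%N then c q else 0)) b =
    Gm M (fun q => (a q + (if (q < k)%N then c q else 0)) +
        (if q == Ordinal Hk then c (Ordinal Hk) else 0)) b.
    apply: Gm_ext => // q; rewrite -addrA; congr (_ + _).
    apply/esym.
  case: (ltngtP q k) => h.
  - have -> : (q == Ordinal Hk) = false by apply/eqP => e; move: h; rewrite e ltnn.
    by rewrite ltnS ltnW // addr0.
  - have -> : (q == Ordinal Hk) = false by apply/eqP => e; move: h; rewrite e ltnn.
    by rewrite ltnS leqNgt h addr0.
  - have -> : q = Ordinal Hk by apply: val_inj.
    by rewrite eqxx /= ltnSn add0r.
  rewrite E; have := OI_step IH (POI_A _ (Ordinal Hk) (Hc (Ordinal Hk))).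
  by rewrite offerA_Gm.
rewrite (@Gm_ext _ _ _ M (fun q : 'I_m => a q + (if (q < k.+1)%N then c q else 0)) b (fun q : 'I_m => a q + (if (q < k)%N then c q else 0)) b) //.
move=> q; have h1 : (q < k)%N by apply: leq_trans (ltn_ord q) Hk.
by rewrite h1 ltnS ltnW.
Qed.

Lemma reachB (R : realFieldType) (n m : nat) (M : game R n m) a b (c : 'I_n -> R) :
  (forall p, 0 <= c p) -> OI (Gm M a b) (Gm M a (fun p => b p + c p)).
Proof.
move=> Hc.
suff H : forall k, OI (Gm M a b)
   (Gm M a (fun p : 'I_n => b p + (if (p < k)%N then c p else 0))).
  rewrite (@Gm_ext _ _ _ M a (fun p => b p + c p) a
     (fun p : 'I_n => b p + (if (p < n)%N then c p else 0))) //.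
  by move=> p; rewrite ltn_ord.
elim=> [|k IH].
  rewrite -(@Gm_ext _ _ _ M a b) //; first exact: OI_refl.
  by move=> p; rewrite ltn0 addr0.
case: (ltnP k n) => Hk.
  have E : Gm M a (fun p : 'I_n => b p + (if (p < k.+1)%N then c p else 0)) =
    Gm M a (fun p => (b p + (if (p < k)%N then c p else 0)) +
        (if p == Ordinal Hk then c (Ordinal Hk) else 0)).
    apply: Gm_ext => // p; rewrite -addrA; congr (_ + _).
    apply/esym.
  case: (ltngtP p k) => h.
  - have -> : (p == Ordinal Hk) = false by apply/eqP => e; move: h; rewrite e ltnn.
    by rewrite ltnS ltnW // addr0.
  - have -> : (p == Ordinal Hk) = false by apply/eqP => e; move: h; rewrite e ltnn.
    by rewrite ltnS leqNgt h addr0.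
  - have -> : p = Ordinal Hk by apply: val_inj.
    by rewrite eqxx /= ltnSn add0r.
  rewrite E; have := OI_step IH (POI_B _ (Ordinal Hk) (Hc (Ordinal Hk))).
  by rewrite offerB_Gm.
rewrite (@Gm_ext _ _ _ M a (fun p : 'I_n => b p + (if (p < k.+1)%N then c p else 0)) a (fun p : 'I_n => b p + (if (p < k)%N then c p else 0))) //.
move=> p; have h1 : (p < k)%N by apply: leq_trans (ltn_ord p) Hk.
by rewrite h1 ltnS ltnW.
Qed.

Lemma OI_form (R : realFieldType) (n m : nat) (M G : game R n m) :
  OI M G -> exists (a : 'I_m -> R) (b : 'I_n -> R),
    (forall p q, G.1 p q = M.1 p q - a q + b p) /\
    (forall p q, G.2 p q = M.2 p q + a q - b p).
Proof.
elim=> [|G1 G2 _ [a [b [H1 H2]]] P].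
  by exists (fun _ => 0), (fun _ => 0); split=> p q; ring.
case: P => [j d _|i d _].
  exists (fun q => a q + (if q == j then d else 0)), b.
  by split=> p q; rewrite /offerA /= !mxE ?H1 ?H2; ring.
exists a, (fun p => b p + (if p == i then d else 0)).
by split=> p q; rewrite /offerB /= !mxE ?H1 ?H2; ring.
Qed.

Lemma le_sum_norm (R : realFieldType) k (f : 'I_k -> R) q :
  f q <= \sum_(r < k) `|f r|.
Proof.
apply: le_trans (ler_norm _) _.
rewrite (bigD1 q) //= lerDl; apply: sumr_ge0 => r _; exact: normr_ge0.
Qed.

Theorem theorem2 (R : realFieldType) (n m : nat) (M : game R n m)
  (i : 'I_n) (j : 'I_m) (x : 'I_m -> R) (y : 'I_n -> R) :
  x j = y i ->
  exists! Mh : game R n m,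
    OI M Mh /\ (forall q : 'I_m, Mh.1 i q = x q) /\ (forall p : 'I_n, Mh.1 p j = y p).
Proof.
move=> Hxy.
pose F p q := M.1 p q + y p - M.1 p j - y i + M.1 i j + x q - M.1 i q.
pose H : game R n m := (\matrix_(p < n, q < m) F p q,
                        \matrix_(p < n, q < m) (M.1 p q + M.2 p q - F p q)).
have Huniq : forall Mh : game R n m,
    OI M Mh /\ (forall q : 'I_m, Mh.1 i q = x q) /\ (forall p : 'I_n, Mh.1 p j = y p) ->
    Mh = H.
  move=> Mh [HO [Hx Hy]].
  have [a [b [H1 H2]]] := OI_form HO.
  rewrite (surjective_pairing Mh) /H; congr (_, _); apply/matrixP => p q;
    rewrite !mxE /F; have e1 := Hx q; have e2 := Hy p; have e3 := Hx j;
    rewrite H1 in e1; rewrite H1 in e2; rewrite H1 in e3.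
    by rewrite H1 -Hxy -e2 -e1 -e3; ring.
  by rewrite H2 -Hxy -e2 -e1 -e3; ring.
pose t := \sum_(q < m) `|x q - M.1 i q| +
          \sum_(p < n) `|M.1 p j - y p - M.1 i j + x j|.
have t1 : forall q, x q - M.1 i q <= t.
  move=> q; apply: le_trans (le_sum_norm (fun q => x q - M.1 i q) q) _.
  rewrite lerDl; apply: sumr_ge0 => r _; exact: normr_ge0.
have t2 : forall p, M.1 p j - y p - M.1 i j + x j <= t.
  move=> p; apply: le_trans
    (le_sum_norm (fun p => M.1 p j - y p - M.1 i j + x j) p) _.
  rewrite lerDr; apply: sumr_ge0 => r _; exact: normr_ge0.
pose a q := M.1 i q + t - x q.
pose b p := y p - M.1 p j + M.1 i j + t - x j.
have Ex : OI M (Gm M a b) /\ (forall q : 'I_m, (Gm M a b).1 i q = x q) /\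
          (forall p : 'I_n, (Gm M a b).1 p j = y p).
  split; last split.
  - rewrite {1}(Gm0 M); apply: OI_trans.
      apply: (@reachA _ _ _ M (fun _ => 0) (fun _ => 0) a).
      by move=> q; have := t1 q; rewrite /a; lra.
    rewrite (@Gm_ext _ _ _ M (fun q => 0 + a q) (fun _ => 0) a (fun _ => 0));
      last by []; last by move=> q; rewrite add0r.
    rewrite (@Gm_ext _ _ _ M a b a (fun p => 0 + b p)) //;
      last by move=> p; rewrite add0r.
    apply: reachB => p; have := t2 p; rewrite /b; lra.
  - by move=> q; rewrite /Gm /= mxE /a /b; rewrite Hxy; ring.
  - by move=> p; rewrite /Gm /= mxE /a /b; ring.
exists (Gm M a b); split; first exact: Ex.
by move=> Mh HM; rewrite (Huniq _ Ex) (Huniq _ HM).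
Qed.
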